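(* Let $g_c$ be a density generator, $\mu\in\mathbb{R}$, $\sigma>0$, $\rho\in(-1,1)$, $\sigma_\rho=\sigma\sqrt{2(1-\rho)}$, and let $W\sim{\rm ULS}(\sigma_\rho,g_c)$ with PDF $f_W$. Suppose the random variable $Z_\rho$ (defined in the context) has a PDF $f_{Z_\rho}$ which is symmetric around $0$, i.e. $f_{Z_\rho}(-z)=f_{Z_\rho}(z)$ for all $z\in\mathbb{R}$. Then $f_W$ is symmetric around $w_0=1/2$, i.e. $f_W(\tfrac12-w)=f_W(\tfrac12+w)$ whenever $\tfrac12\pm w\in(0,1)$, and both the median and the mean of $W$ equal $1/2$.
   Context: A density generator is a function $g_c:[0,\infty)\to[0,\infty)$ with $0<\int_0^\infty g_c(u)\,{\rm d}u<\infty$; put $Z_{g_c}=\pi\int_0^\infty g_c(u)\,{\rm d}u$ and $\eta=\exp(\mu)$. A random variable $W$ with support $(0,1)$ follows ${\rm ULS}(\sigma_\rho,g_c)$ if its PDF is $$f_W(w)=\frac{1}{w(1-w)\sigma^2\sqrt{1-\rho^2}\,Z_{g_c}}\int_0^\infty \frac1t\, g_c\!\left(\frac{\tilde t_w^{\,2}-2\rho\tilde t_w\tilde t+\tilde t^{\,2}}{1-\rho^2}\right){\rm d}t,\quad 0<w<1,$$ where $t_w=\frac{w}{1-w}t$, $\tilde t_w=\frac1\sigma\log(t_w/\eta)$, $\tilde t=\frac1\sigma\log(t/\eta)$. Let $U_1,U_2,R,D$ be mutually independent with $\mathbb{P}(U_i=-1)=\mathbb{P}(U_i=1)=1/2$,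 $D$ having PDF $2/(\pi\sqrt{1-d^2})$ on $(0,1)$, and $R$ having PDF $2rg_c(r^2)/\int_0^\infty g_c(u)\,{\rm d}u$ on $(0,\infty)$. Set $Z_1=RDU_1$, $Z_2=R\sqrt{1-D^2}\,U_2$ and $Z_\rho=\frac{1}{\sqrt{2(1-\rho)}}[(1-\rho)Z_1-\sqrt{1-\rho^2}\,Z_2]$. *)

(* Defs.v *)
From HB Require Import structures.
From mathcomp Require Import all_boot all_order all_algebra.
From mathcomp Require Import all_classical all_reals all_analysis.
Set Implicit Arguments. Unset Strict Implicit. Unset Printing Implicit Defensive.
Import Order.TTheory GRing.Theory Num.Theory.
Import numFieldNormedType.Exports.
Local Open Scope classical_set_scope.
Local Open Scope ring_scope.

Section defs.
Variable R : realType.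
Local Notation leb := (@lebesgue_measure R).

Definition density_generator (g : R -> R) : Prop :=
  (forall u, 0 <= u -> 0 <= g u) /\
  measurable_fun `[(0:R), +oo[ g /\
  leb.-integrable `[(0:R), +oo[ (EFin \o g) /\
  0 < \int[leb]_(u in `[(0:R), +oo[) g u.

Definition Zg (g : R -> R) : R := pi * \int[leb]_(u in `[(0:R), +oo[) g u.

(* PDF of ULS(sigma_rho, g_c) (formula of the context, meaningful for 0<w<1) *)
Definition ULS_pdf (g : R -> R) (mu sigma rho : R) (w : R) : R :=
  let eta := expR mu in
  (w * (1 - w) * sigma ^+ 2 * Num.sqrt (1 - rho ^+ 2) * Zg g)^-1 *
  \int[leb]_(t in `](0:R), +oo[)
     (let tw := w / (1 - w) * t in
      let ttw := ln (tw / eta) / sigma in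
      let tt := ln (t / eta) / sigma in
      t^-1 * g ((ttw ^+ 2 - 2 * rho * ttw * tt + tt ^+ 2) / (1 - rho ^+ 2))).

Definition R_pdf (g : R -> R) (r : R) : R :=
  2 * r * g (r ^+ 2) / \int[leb]_(u in `[(0:R), +oo[) g u.

Definition D_pdf (x : R) : R := 2 / (pi * Num.sqrt (1 - x ^+ 2)).

Definition has_pdf d (T : measurableType d) (P : probability T R)
  (X : T -> R) (S : set R) (f : R -> R) : Prop :=
  forall A : set R, measurable A ->
    P (X @^-1` A) = (\int[leb]_(x in A `&` S) (f x)%:E)%E.

Definition mutually_independent4 d (T : measurableType d) (P : probability T R)
  (X1 X2 X3 X4 : T -> R) : Prop :=
  forall A1 A2 A3 A4 : set R,
    measurable A1 -> measurable A2 -> measurable A3 -> measurable A4 ->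
    P (X1 @^-1` A1 `&` X2 @^-1` A2 `&` X3 @^-1` A3 `&` X4 @^-1` A4) =
    (P (X1 @^-1` A1) * P (X2 @^-1` A2) * P (X3 @^-1` A3) * P (X4 @^-1` A4))%E.

Definition rademacher d (T : measurableType d) (P : probability T R)
  (U : T -> R) : Prop :=
  P (U @^-1` [set -1]) = (1/2)%:E /\ P (U @^-1` [set 1]) = (1/2)%:E.

Definition Z_rho T (rho : R) (U1 U2 Rv D : T -> R) : T -> R :=
  fun x =>
    let Z1 := Rv x * D x * U1 x in
    let Z2 := Rv x * Num.sqrt (1 - D x ^+ 2) * U2 x in
    ((1 - rho) * Z1 - Num.sqrt (1 - rho ^+ 2) * Z2) / Num.sqrt (2 * (1 - rho)).

End defs.

(* Main.v *)
Require Import Defs.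
From HB Require Import structures.
From mathcomp Require Import all_boot all_order all_algebra.
From mathcomp Require Import all_classical all_reals all_analysis.
Import Order.TTheory GRing.Theory Num.Theory.
Import numFieldNormedType.Exports.
From mathcomp Require Import measurable_realfun.
From mathcomp Require Import ring lra.
Local Open Scope classical_set_scope.
Local Open Scope ring_scope.

Section S.
Variable R : realType.
Local Notation leb := (@lebesgue_measure R).

Definition aff (a b : R) (u : R) : R := a + b * u.

Lemma measurable_aff a b : measurable_fun setT (aff a b).
Proof.
apply: measurable_funD => //; exact: mulrl_measurable.
Qed.

Lemma measurable_affR a b : measurable_fun (setT : set (measurableTypeR R)) (aff a b : measurableTypeR R -> measurableTypeR R).
Proof. exact: measurable_aff. Qed.

Definition lebaff (a b : R) : set (measurableTypeR R) -> \bar R := pushforward leb (aff a b : measurableTypeR R -> measurableTypeR R).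

Let lebaff0 a b : lebaff a b set0 = 0%E.
Proof. by rewrite /lebaff /pushforward preimage_set0 measure0. Qed.

Let lebaff_ge0 a b A : (0 <= lebaff a b A)%E.
Proof. by rewrite /lebaff /pushforward; apply: measure_ge0. Qed.

Let lebaff_sigma_additive a b : semi_sigma_additive (lebaff a b).
Proof.
have mf := measurable_affR a b.
move=> F mF tF mUF; rewrite /lebaff /pushforward preimage_bigcup.
apply: measure_semi_sigma_additive.
- by move=> n; rewrite -[X in measurable X]setTI; exact: mf.
- apply/trivIsetP => /= i j _ _ ij; rewrite -preimage_setI.
  by move/trivIsetP : tF => /(_ _ _ _ _ ij) ->//; rewrite preimage_set0.
- by rewrite -preimage_bigcup -[X in measurable X]setTI; exact: mf.
Qed.

HB.instance Definition _ a b := isMeasure.Build _ _ _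
  (lebaff a b) (lebaff0 a b) (lebaff_ge0 a b) (lebaff_sigma_additive a b).

Lemma lebaffE0 a b A : lebaff a b A = leb (aff a b @^-1` A).
Proof. by []. Qed.

Lemma lebaffE a b (b0 : b != 0) (A : set R) : measurable A ->
  lebaff a b A = (`|b|^-1%:E * leb A)%E.
Proof.
move=> mA.
have bge0 : 0 <= `|b| by [].
have := @lebesgue_measure_unique R (mscale (NngNum bge0) (lebaff a b)).
move=> /(_ _ A mA) ->.
- rewrite /mscale /= muleA -EFinM mulVf ?mul1e // normr_eq0 //.
- move=> _ [[x y] _ <-] /=.
  rewrite /mscale /= lebaffE0.
  have [bp|bn] := ltrP 0 b.
    have -> : aff a b @^-1` `]x, y] = `](x - a) / b, (y - a) / b]%classic.
      apply/seteqP; split => u /=; rewrite /aff !in_itv /=.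
        by rewrite ler_pdivlMr // ltr_pdivrMr // => /andP[h1 h2]; apply/andP; split; lra.
      by rewrite ler_pdivlMr // ltr_pdivrMr // => /andP[h1 h2]; apply/andP; split; lra.
    rewrite !lebesgue_measure_itv /= !lte_fin ltr_pM2r ?invr_gt0 // ltrBlDr subrK.
    case: ifP => _; last by rewrite mule0.
    rewrite -EFinM gtr0_norm //; congr (_%:E).
    by field; rewrite lt0r_neq0.
  have bn' : b < 0 by rewrite lt_neqAle b0 bn.
  have -> : aff a b @^-1` `]x, y] = `[(y - a) / b, (x - a) / b[%classic.
    apply/seteqP; split => u /=; rewrite /aff !in_itv /=.
      by rewrite ler_ndivrMr // ltr_ndivlMr // => /andP[h1 h2]; apply/andP; split; nra.
    by rewrite ler_ndivrMr // ltr_ndivlMr // => /andP[h1 h2]; apply/andP; split; nra.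
  rewrite !lebesgue_measure_itv /= !lte_fin ltr_nM2r ?invr_lt0 // ltrBlDr subrK.
  case: ifP => _; last by rewrite mule0.
  rewrite -EFinM ltr0_norm //; congr (_%:E).
  by field; rewrite ltr0_neq0.
Qed.
Lemma integral_aff a b (b0 : b != 0) (D : set R) (F : R -> \bar R) :
  measurable D -> measurable_fun D F -> (forall x, D x -> (0 <= F x)%E) ->
  (\int[leb]_(x in D) F x =
   `|b|%:E * \int[leb]_(u in aff a b @^-1` D) F (aff a b u))%E.
Proof.
move=> mD mF F0.
have binv : 0 <= `|b|^-1 by rewrite invr_ge0.
have H := @ge0_integral_pushforward _ _ (measurableTypeR R) (measurableTypeR R) R (aff a b) (measurable_affR a b) leb D F mD mF.
rewrite -[X in _ = (_ * X)%E]H; last by move=> y /set_mem; exact: F0.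
rewrite [in RHS](eq_measure_integral (mscale (NngNum binv) leb)); last first.
  by move=> mf0 A mA _; transitivity (lebaff a b A); [by [] | exact: lebaffE].
  exact: measurable_affR.
rewrite ge0_integral_mscale //= muleA -EFinM mulfV ?mul1e // normr_eq0 //.
Qed.
End S.


Section ULS.
Variable R : realType.
Local Notation leb := (@lebesgue_measure R).
Variables (g : R -> R) (mu sigma rho : R).
Hypothesis hg : density_generator g.
Hypothesis hsigma : 0 < sigma.
Hypothesis hrho : -1 < rho < 1.

Definition Qf (x y : R) := (x ^+ 2 - 2 * rho * x * y + y ^+ 2) / (1 - rho ^+ 2).

Lemma Qf_ge0 x y : 0 <= Qf x y.
Proof.
case/andP: hrho => h1 h2.
apply: divr_ge0; last by nra.
have -> : x ^+ 2 - 2 * rho * x * y + y ^+ 2 = (x - rho * y) ^+ 2 + (1 - rho ^+ 2) * y ^+ 2 by ring.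
apply: addr_ge0; first exact: sqr_ge0.
apply: mulr_ge0; [nra | exact: sqr_ge0].
Qed.

Lemma QfC x y : Qf x y = Qf y x.
Proof. by rewrite /Qf; congr (_ / _); ring. Qed.

Definition Lf (t : R) := ln (t / expR mu) / sigma.
Definition J (w t : R) := t^-1 * g (Qf (Lf (w / (1 - w) * t)) (Lf t)).
Definition pref (w : R) := w * (1 - w) * sigma ^+ 2 * Num.sqrt (1 - rho ^+ 2) * Zg g.

Lemma ULS_pdfE w : ULS_pdf g mu sigma rho w =
  (pref w)^-1 * \int[leb]_(t in `]0, +oo[) J w t.
Proof. by []. Qed.

Lemma g_ge0 u : 0 <= u -> 0 <= g u.
Proof. by case: hg => + _; apply. Qed.

Lemma J_ge0 w t : 0 < t -> 0 <= J w t.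
Proof.
move=> t0; apply: mulr_ge0; first by rewrite invr_ge0 ltW.
exact/g_ge0/Qf_ge0.
Qed.

Lemma measurable_Qf d (T : measurableType d) (D : set T) (X Y : T -> R) :
  measurable_fun D X -> measurable_fun D Y ->
  measurable_fun D (fun p => Qf (X p) (Y p)).
Proof.
move=> mX mY; rewrite /Qf.
apply: measurable_funM => //.
apply: measurable_funD => //; last exact: measurable_funX.
apply: measurable_funB => //; first exact: measurable_funX.
apply: measurable_funM => //.
apply: measurable_funM => //.
Qed.

Definition Jp (p : R * R) : R :=
  \1_(`]0, +oo[ : set R) p.2 * (expR (- ln p.2) *
    g (Qf ((ln p.1 - ln (1 - p.1) + ln p.2 - mu) / sigma) ((ln p.2 - mu) / sigma))).

Lemma measurable_Jp : measurable_fun setT Jp.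
Proof.
apply: measurable_funM.
  have mi : measurable_fun setT (\1_(`]0, +oo[ : set R) : R -> R).
    by apply: measurable_indic.
  exact: measurableT_comp mi measurable_snd.
apply: measurable_funM.
  have mlnsnd : measurable_fun setT (fun p : R * R => ln p.2).
    exact: measurableT_comp (@measurable_ln R) measurable_snd.
  exact: (measurableT_comp (@measurable_expR R) (measurable_funN mlnsnd)).
have mg : measurable_fun (`[0%R, +oo[ : set R) g by case: hg => _ [].
have mlnsnd : measurable_fun setT (fun p : R * R => ln p.2).
  exact: measurableT_comp (@measurable_ln R) measurable_snd.
have mlnfst : measurable_fun setT (fun p : R * R => ln p.1).
  exact: measurableT_comp (@measurable_ln R) measurable_fst.
have mln1fst : measurable_fun setT (fun p : R * R => ln (1 - p.1)).
  apply: measurableT_comp (@measurable_ln R) _.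
  exact: measurable_funB.
apply: (measurable_comp (F := (`[0%R, +oo[ : set R))) => //.
  by move=> _ [p _ <-] /=; rewrite in_itv /= andbT Qf_ge0.
apply: measurable_Qf.
  apply: measurable_funM => //.
  apply: measurable_funB => //.
  apply: measurable_funD => //.
  exact: measurable_funB.
apply: measurable_funM => //.
exact: measurable_funB.
Qed.

Lemma Jp_ge0 p : 0 <= Jp p.
Proof.
rewrite /Jp; apply: mulr_ge0; first by rewrite indicE ler0n.
apply: mulr_ge0; first exact: expR_ge0.
exact/g_ge0/Qf_ge0.
Qed.

Lemma JpE w t : 0 < w < 1 -> 0 < t -> Jp (w, t) = J w t.
Proof.
case/andP=> w0 w1 t0.
rewrite /Jp /J /= indicE mem_set; last by rewrite /= in_itv /= andbT.
rewrite mul1r.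
rewrite expRN lnK ?posrE //; congr (_ * g (Qf _ _)).
  have w1' : 0 < 1 - w by rewrite subr_gt0.
  have wd : 0 < w / (1 - w) by rewrite divr_gt0.
  rewrite /Lf ln_div; last 2 first.
  - by rewrite posrE mulr_gt0.
  - by rewrite posrE expR_gt0.
  rewrite expRK lnM; last 2 first.
  - by rewrite posrE.
  - by rewrite posrE.
  rewrite ln_div //; by rewrite posrE.
rewrite /Lf ln_div ?expRK //; by rewrite posrE ?expR_gt0.
Qed.

Lemma measurable_J w : 0 < w < 1 -> measurable_fun (`]0, +oo[ : set R) (J w).
Proof.
move=> hw.
have H := measurable_fun_pair2 w measurable_Jp.
have H' := measurable_funS measurableT (@subsetT _ (`]0, +oo[ : set R)) H.
apply: eq_measurable_fun H' => t /set_mem/=; rewrite in_itv /= andbT => t0.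
exact: JpE.
Qed.

Lemma measurable_EJ w : 0 < w < 1 ->
  measurable_fun (`]0, +oo[ : set R) (fun t => (J w t)%:E).
Proof. by move=> hw; apply/measurable_EFinP; exact: measurable_J. Qed.

Lemma J_sym (w : R) : 0 < w < 1 ->
  (\int[leb]_(t in `]0%R, +oo[) (J (1 - w)%R t)%:E =
   \int[leb]_(t in `]0%R, +oo[) (J w t)%:E)%E.
Proof.
move=> hw; have /andP[w0 w1] := hw.
have w1' : 0 < 1 - w by rewrite subr_gt0.
have hw' : 0 < 1 - w < 1 by rewrite w1' /= ltrBlDr ltrDl.
set k := w / (1 - w).
have k0 : 0 < k by rewrite divr_gt0.
rewrite (@integral_aff R 0 k (lt0r_neq0 k0)); last 3 first.
- exact: measurable_itv.
- exact: measurable_EJ.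
- by move=> x /=; rewrite in_itv /= andbT => x0; rewrite lee_fin J_ge0.
have -> : @aff R 0 k @^-1` (`]0, +oo[ : set R) = `]0, +oo[%classic.
  apply/seteqP; split => u /=; rewrite /aff add0r !in_itv /= !andbT.
  - by rewrite pmulr_rgt0.
  - by move=> u0; rewrite mulr_gt0.
transitivity (`|k|%:E * \int[leb]_(u in `]0%R, +oo[) ((k^-1)%:E * (J w u)%:E))%E.
  congr (_ * _)%E; apply: eq_integral.
  move=> u /[!inE]; rewrite /= in_itv /= andbT => u0.
  rewrite -EFinM; congr (_%:E).
  rewrite /J /aff add0r.
  have e : (1 - w) / (1 - (1 - w)) * (k * u) = u.
    rewrite /k; field.
    have -> : 1 - (1 - w) = w by ring.
    by rewrite (lt0r_neq0 w0) (lt0r_neq0 w1').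
  by rewrite e QfC invfM mulrA [k^-1 * _]mulrC.
rewrite ge0_integralZl //; last 3 first.
- exact: measurable_EJ.
- by move=> x /=; rewrite in_itv /= andbT => x0; rewrite lee_fin J_ge0.
- by rewrite lee_fin invr_ge0 ltW.
by rewrite muleA -EFinM gtr0_norm // mulfV ?mul1e // lt0r_neq0.
Qed.

Lemma ULS_sym1 (v : R) : 0 < v < 1 ->
  ULS_pdf g mu sigma rho (1 - v) = ULS_pdf g mu sigma rho v.
Proof.
move=> hv; rewrite !ULS_pdfE; congr (_ * _).
  by rewrite /pref; congr (_^-1); ring.
by rewrite /Rintegral J_sym.
Qed.

Lemma ULS_sym (w : R) : 0 < 1/2 - w < 1 -> 0 < 1/2 + w < 1 ->
  ULS_pdf g mu sigma rho (1/2 - w) = ULS_pdf g mu sigma rho (1/2 + w).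
Proof.
move=> h1 h2.
have -> : 1/2 + w = 1 - (1/2 - w) by field.
by rewrite ULS_sym1.
Qed.

Lemma Zg_gt0 : 0 < Zg g.
Proof. by rewrite /Zg; apply: mulr_gt0; [exact: pi_gt0 | case: hg => _ [_ []]]. Qed.

Lemma pref_gt0 x : 0 < x < 1 -> 0 < pref x.
Proof.
case/andP => x0 x1; rewrite /pref.
case/andP: hrho => r1 r2.
apply: mulr_gt0; last exact: Zg_gt0.
apply: mulr_gt0; last by rewrite sqrtr_gt0; nra.
apply: mulr_gt0; last by rewrite exprn_gt0.
by rewrite mulr_gt0 // subr_gt0.
Qed.

Lemma ULS_ge0 x : 0 < x < 1 -> 0 <= ULS_pdf g mu sigma rho x.
Proof.
move=> hx; rewrite ULS_pdfE; apply: mulr_ge0.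
  by rewrite invr_ge0 ltW // pref_gt0.
apply: Rintegral_ge0 => t /=; rewrite in_itv /= andbT => t0.
exact: J_ge0.
Qed.

Lemma int_J_fubini x : 0 < x < 1 ->
  (\int[leb]_(t in `]0%R, +oo[) (J x t)%:E = fubini_F leb (EFin \o Jp) x)%E.
Proof.
move=> hx; rewrite integral_mkcond /fubini_F; apply: eq_integral => t _.
rewrite patchE /=; case: ifPn => [|tD].
  by rewrite inE /= in_itv /= andbT => t0; rewrite JpE.
by rewrite /Jp indicE (negbTE tD) mul0r.
Qed.

Lemma measurable_ULS : measurable_fun (`]0, 1[ : set R) (ULS_pdf g mu sigma rho).
Proof.
have mF : measurable_fun setT (fun x => fine (fubini_F leb (EFin \o Jp) x)).
  apply: measurableT_comp (fine_measurable measurableT) _.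
  apply: measurable_fun_fubini_tonelli_F.
    by apply/measurable_EFinP; exact: measurable_Jp.
  by move=> p /=; rewrite lee_fin Jp_ge0.
have mP : measurable_fun setT (fun x => expR (- ln (pref x))).
  apply: measurableT_comp (@measurable_expR R) _.
  apply: measurable_funN.
  apply: measurableT_comp (@measurable_ln R) _.
  rewrite /pref.
  apply: measurable_funM => //.
  apply: measurable_funM => //.
  apply: measurable_funM => //.
  apply: measurable_funM => //.
  exact: measurable_funB.
have mH := measurable_funS measurableT (@subsetT _ (`]0, 1[ : set R)) (measurable_funM mP mF).
apply: eq_measurable_fun mH => x /set_mem/= hx.
rewrite ULS_pdfE expRN lnK ?posrE ?pref_gt0 //; congr (_ * _).
by rewrite /Rintegral int_J_fubini.
Qed.

End ULS.

Theorem proposition3 (R : realType) (g : R -> R) (mu sigma rho : R)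
  (hg : density_generator g) (hsigma : 0 < sigma) (hrho : -1 < rho < 1)
  (* W ~ ULS(sigma_rho, g_c), sigma_rho = sigma * sqrt(2(1-rho)) *)
  (d1 : measure_display) (T1 : measurableType d1) (P1 : probability T1 R)
  (W : T1 -> R) (mW : measurable_fun setT W)
  (hW : has_pdf P1 W `](0:R), 1%R[ (ULS_pdf g mu sigma rho))
  (* the construction of Z_rho *)
  (d2 : measure_display) (T2 : measurableType d2) (P2 : probability T2 R)
  (U1 U2 Rv D : T2 -> R)
  (mU1 : measurable_fun setT U1) (mU2 : measurable_fun setT U2)
  (mRv : measurable_fun setT Rv) (mD : measurable_fun setT D)
  (hind : mutually_independent4 P2 U1 U2 Rv D)
  (hU1 : rademacher P2 U1) (hU2 : rademacher P2 U2)
  (hD : has_pdf P2 D `](0:R), 1%R[ (@D_pdf R))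
  (hRv : has_pdf P2 Rv `](0:R), +oo[ (R_pdf g))
  (* Z_rho has a PDF fZ which is symmetric around 0 *)
  (fZ : R -> R) (hZ : has_pdf P2 (Z_rho rho U1 U2 Rv D) setT fZ)
  (hsym : forall z, fZ (- z) = fZ z) :
  (forall w, 0 < 1/2 - w < 1 -> 0 < 1/2 + w < 1 ->
     ULS_pdf g mu sigma rho (1/2 - w) = ULS_pdf g mu sigma rho (1/2 + w)) /\
  ((1/2)%:E <= P1 (W @^-1` `]-oo, (1/2)%R]) /\
   (1/2)%:E <= P1 (W @^-1` `[(1/2)%R, +oo[))%E /\
  ('E_P1[W] = (1/2)%:E)%E.
Proof.

Proof.
set f := ULS_pdf g mu sigma rho.
have fsym x : 0 < x < 1 -> f (1 - x) = f x by move=> hx; apply: ULS_sym1.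
have fge0 x : 0 < x < 1 -> 0 <= f x by move=> hx; apply: ULS_ge0.
have mf : measurable_fun (`]0, 1[ : set R) f by apply: measurable_ULS.
have mpre A : measurable A -> measurable (W @^-1` A).
  by move=> mA; rewrite -[X in measurable X]setTI; exact: mW.
have S A : measurable A ->
    P1 (W @^-1` A) = P1 (W @^-1` (aff R 1 (-1) @^-1` A)).
  move=> mA.
  have mA' : measurable (aff R 1 (-1) @^-1` A).
    by rewrite -[X in measurable X]setTI; exact: measurable_aff.
  rewrite !hW //.
  have mI : measurable (A `&` (`]0, 1[ : set R)).
    by apply: measurableI => //; exact: measurable_itv.
  have b0 : (-1 : R) != 0 by rewrite oppr_eq0 oner_eq0.
  have mF : measurable_fun (A `&` (`]0, 1[ : set R)) (fun x => (f x)%:E).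
    apply/measurable_EFinP.
    exact: (measurable_funS (measurable_itv _) (@subIsetr _ _ _) mf).
  have F0 : forall x, (A `&` (`]0, 1[ : set R)) x -> (0 <= (f x)%:E)%E.
    by move=> x [_ /=]; rewrite in_itv /= => hx; rewrite lee_fin fge0.
  rewrite (@integral_aff R 1 (-1) b0 _ _ mI mF F0).
  rewrite normrN1 mul1e preimage_setI.
  have -> : aff R 1 (-1) @^-1` (`]0, 1[ : set R) = `]0, 1[%classic.
    apply/seteqP; split => u /=; rewrite /aff !in_itv /=; lra.
  apply: eq_integral => u /set_mem [_ hu].
  rewrite /aff mulN1r fsym //; move: hu; by rewrite /= in_itv.
split; first by move=> w h1 h2; apply: ULS_sym.
have hP1 : P1 setT = 1%E := probability_setT P1.
split.
  set Iu := (`[(1/2)%R, +oo[%classic : set R).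
  set Il := (`]-oo, (1/2)%R]%classic : set R).
  have mIu : measurable Iu by exact: measurable_itv.
  have mIl : measurable Il by exact: measurable_itv.
  have e1 : aff R 1 (-1) @^-1` Iu = Il.
    apply/seteqP; split => u; rewrite /Iu /Il /aff /= !in_itv /=; lra.
  have hmed : P1 (W @^-1` Il) = P1 (W @^-1` Iu).
    by rewrite [RHS](S _ mIu) e1.
  have cover : W @^-1` Il `|` W @^-1` Iu = setT.
    apply/seteqP; split => // x _; rewrite /Iu /Il /= !in_itv /=.
    by case: (lerP (W x) (1/2)) => h; [left | right; rewrite ltW].
  have le1 : (1 <= P1 (W @^-1` Iu) + P1 (W @^-1` Iu))%E.
    rewrite -{1}hmed -hP1 -cover.
    apply: measureU2; exact/mpre.
  rewrite hmed.
  have p0 : (0 <= P1 (W @^-1` Iu))%E by exact: measure_ge0.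
  have p1 : (P1 (W @^-1` Iu) <= 1)%E.
    by apply: probability_le1; exact/mpre.
  have pfin : P1 (W @^-1` Iu) \is a fin_num by rewrite ge0_fin_numE // (le_lt_trans p1) ?ltry.
  move: le1 p0; rewrite -(fineK pfin) -EFinD !lee_fin => le1 p0.
  split; lra.
set I01 := (`]0%R, 1%R[%classic : set R).
have mI01 : measurable I01 by exact: measurable_itv.
have hP01 : P1 (W @^-1` I01) = 1%E.
  have h1 := hW setT measurableT.
  rewrite setTI preimage_setT hP1 in h1.
  by rewrite hW // setIid -h1.
have hN : P1 (~` (W @^-1` I01)) = 0%E.
  by rewrite probability_setC ?hP01 ?subee //; exact: mpre.
pose h (y : R) := Num.max 0 (Num.min 1 y).
have hid y : 0 < y < 1 -> h y = y.
  case/andP => y0 y1; rewrite /h.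
  have -> : Num.min 1 y = y by apply/min_idPr; exact: ltW.
  by apply/max_idPr; exact: ltW.
have hN1 y : h (1 - y) = 1 - h y.
  rewrite /h; case: (lerP y 0) => y0.
    try (have -> : Num.min 1 (1 - y) = 1 by apply/min_idPl; lra).
    try (have -> : Num.min 1 y = y by apply/min_idPr; lra).
    try (have -> : Num.max 0 1 = 1 :> R by apply/max_idPr; lra).
    try (have -> : Num.max 0 y = 0 by apply/max_idPl; lra).
    lra.
  case: (lerP 1 y) => y1.
    try (have -> : Num.min 1 (1 - y) = 1 - y by apply/min_idPr; lra).
    try (have -> : Num.min 1 y = 1 by apply/min_idPl; lra).
    try (have -> : Num.max 0 (1 - y) = 0 by apply/max_idPl; lra).
    try (have -> : Num.max 0 1 = 1 :> R by apply/max_idPr; lra).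
    lra.
  try (have -> : Num.min 1 (1 - y) = 1 - y by apply/min_idPr; lra).
  try (have -> : Num.min 1 y = y by apply/min_idPr; lra).
  try (have -> : Num.max 0 (1 - y) = 1 - y by apply/max_idPr; lra).
  try (have -> : Num.max 0 y = y by apply/max_idPr; lra).
  lra.
have h0 y : 0 <= h y by rewrite /h le_max lexx.
have h1 y : h y <= 1 by rewrite /h ge_max ler01 ge_min lexx.
have mh : measurable_fun setT h.
  by apply: measurable_maxr => //; apply: measurable_minr.
have mhW : measurable_fun setT (fun x => (h (W x))%:E).
  by apply/measurable_EFinP; exact: measurableT_comp mh mW.
pose V := fun x => 1 - W x.
have mV : measurable_fun setT V by apply: measurable_funB.
have step1 : (\int[P1]_x (W x)%:E = \int[P1]_x (h (W x))%:E)%E.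
  apply: ae_eq_integral => //.
  - by apply/measurable_EFinP.
  - exists (~` (W @^-1` I01)); split => //.
      by apply: measurableC; exact: mpre.
    move=> x /= Hn HW; apply: Hn => _.
    by rewrite hid //; move: HW; rewrite /I01 /= in_itv.
have push X : measurable_fun setT X ->
    (\int[P1]_x (h (X x))%:E = \int[pushforward P1 X]_(y in setT) (h y)%:E)%E.
  move=> mX; rewrite ge0_integral_pushforward //.
  - by apply/measurable_EFinP.
  - by move=> y _; rewrite lee_fin.
have step2 : (\int[P1]_x (h (W x))%:E = \int[P1]_x (h (V x))%:E)%E.
  rewrite !push //.
  apply: eq_measure_integral => /=.
  move=> A mA _; rewrite /pushforward (S _ mA).
  congr (P1 _); apply/seteqP; split => x; rewrite /V /aff /= mulN1r //.
have step3 : (\int[P1]_x (h (V x))%:E = \int[P1]_x (1 - h (W x))%:E)%E.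
  by apply: eq_integral => x _; rewrite /V hN1.
set I := (\int[P1]_x (h (W x))%:E)%E.
have I0 : (0 <= I)%E by apply: integral_ge0 => x _; rewrite lee_fin.
have step4 : (I + I = 1)%E.
  rewrite [X in (_ + X)%E]step2 step3 -ge0_integralD //; first last.
  - by apply/measurable_EFinP; apply: measurable_funB => //; exact: measurableT_comp mh mW.
  - by move=> x _; rewrite lee_fin subr_ge0.
  - by move=> x _; rewrite lee_fin.
  rewrite (eq_integral (fun=> 1%E)); last by move=> x _; rewrite -EFinD addrC subrK.
  rewrite integral_cst // mul1e; exact: probability_setT.
rewrite unlock step1 -/I.
have Ifin : I \is a fin_num.
  rewrite ge0_fin_numE //; apply: (@le_lt_trans _ _ 1%E); last exact: ltry.
  by rewrite -step4 leeDl.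
move: step4; rewrite -(fineK Ifin) -EFinD => /eqP; rewrite eqe => /eqP e.
congr (_%:E); lra.
Qed.
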